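(* Let $x,v,g:[0,\infty)\to\mathbb{R}^3$ satisfy \[\dot x=v(t),\qquad \dot v=-a(x,t)v(t)+g(t),\] where the scalar coefficient satisfies $a(x,t)\ge H/(1+|x|^2)^{\beta}$ for some constants $H>0$ and $\beta<1/2$, and $|g(t)|=O((1+t)^{-\eta})$ for some constant $\eta>1$. Then $|v(t)|=O((1+t)^{-(\eta-1)})$, with the order constant depending only on $x(0)$, $v(0)$, $H$, $\beta$ and $\eta$. *)

(* Defs.v *)
From HB Require Import structures.
From mathcomp Require Import all_boot all_order all_algebra.
From mathcomp Require Import all_classical all_reals all_analysis.
Set Implicit Arguments. Unset Strict Implicit. Unset Printing Implicit Defensive.
Import Order.TTheory GRing.Theory Num.Theory.
Import numFieldNormedType.Exports.
Local Open Scope ring_scope.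

Definition enorm {R : realType} (u : 'rV[R]_3) : R :=
  Num.sqrt (\sum_(i < 3) (u ord0 i) ^+ 2).

(* Main.v *)
Require Import Defs.
From HB Require Import structures.
From mathcomp Require Import all_boot all_order all_algebra.
From mathcomp Require Import all_classical all_reals all_analysis.
From mathcomp Require Import ring lra.
Import Order.TTheory GRing.Theory Num.Theory.
Import numFieldNormedType.Exports.
Local Open Scope classical_set_scope.
Local Open Scope ring_scope.

Section V.
Variable R : realType.
Lemma near_right_ex (P : R -> Prop) s :
  (\forall r \near s^'+, P r) -> exists2 e : R, 0 < e & forall r, s < r < s + e -> P r.
Proof.
move=> /nbhs_ballP[e e0 He]; exists e => // r /andP[sr rse].
apply: He => //; rewrite /ball /= ltr_distlC; apply/andP; split => //.
by rewrite ltrBlDr (lt_le_trans sr) // lerDl ltW.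
Qed.

Lemma near_left_ex (P : R -> Prop) s :
  (\forall r \near s^'-, P r) -> exists2 e : R, 0 < e & forall r, s - e < r < s -> P r.
Proof.
move=> /nbhs_ballP[e e0 He]; exists e => // r /andP[sr rse].
apply: He => //; rewrite /ball /= ltr_distlC; apply/andP; split => //.
by rewrite (lt_le_trans rse) // lerDl ltW.
Qed.

Lemma near_dnbhs_ex (P : R -> Prop) :
  (\forall r \near (0:R)^', P r) -> exists2 e : R, 0 < e & forall r, `|r| < e -> r != 0 -> P r.
Proof.
move=> /nbhs_ballP[e e0 He]; exists e => // r re rn0.
by apply: He => //; rewrite /ball /= sub0r normrN.
Qed.

Lemma derive_quot (u : R -> R) (t d : R) : is_derive t 1 u d -> 
  (fun h => h^-1 * (u (h + t) - u t)) @ 0^' --> d.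
Proof.
move=> [dr dv]; move: dr; rewrite /derivable; rewrite /derive in dv; rewrite dv.
suff -> : (fun h => h^-1 * (u (h + t) - u t)) = (fun h : R => h^-1 *: ((u \o shift t) (h *: 1) - u t)) by [].
apply/funext => h /=; rewrite /shift /=. rewrite -[h *: 1]/(h * 1) mulr1 //.
Qed.

Lemma barrier (u du : R -> R) :
  u x @[x --> 0^'+] --> u 0 ->
  (forall t : R, 0 < t -> is_derive t 1 u (du t)) ->
  u 0 < 0 ->
  (forall t, 0 < t -> u t = 0 -> du t < 0) ->
  forall t, 0 <= t -> u t < 0.
Proof.
move=> c0 du0 u0 hz t t0; rewrite ltNge; apply/negP => ut.
pose A := [set s | 0 <= s <= t /\ 0 <= u s].
have At : A t by split => //; rewrite t0 lexx.
have An : A !=set0 by exists t.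
have Alb : has_lbound A by exists 0 => r [/andP[]].
set s := inf A.
have s0 : 0 <= s by apply: lb_le_inf => // r [/andP[]].
have st : s <= t by apply: (ge_inf Alb).
have left r : 0 <= r -> r < s -> u r < 0.
  move=> r0 rs; rewrite ltNge; apply/negP => ur.
  have : s <= r by apply: (ge_inf Alb); split => //; rewrite r0 (ltW (lt_le_trans rs st)).
  by rewrite leNgt rs.
have cs : 0 < s -> {for s, continuous u}.
  move=> sp; have [dr _] := du0 s sp.
  by apply: differentiable_continuous; apply/derivable1_diffP.
have us : 0 <= u s.
  rewrite leNgt; apply/negP => us.
  have nr : \forall r \near s^'+, u r < 0.
    have [sp|s0'] : 0 < s \/ 0 = s.
      by move: s0; rewrite le_eqVlt => /predU1P[->|->]; [right|left].
    - have H1 := @cvg_at_right_filter R R u s (u s) (cs sp); exact: (@cvgr_lt _ _ _ _ _ _ H1 _ us).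
    - by rewrite -s0' in us *; exact: (@cvgr_lt _ _ _ _ _ _ c0 _ us).
  have [e e0 He] := near_right_ex _ _ nr.
  have [a Aa ae] := inf_adherent e0 (conj An Alb).
  have sa : s <= a := ge_inf Alb Aa.
  case: Aa => _ ua.
  move: sa; rewrite le_eqVlt => /predU1P[sa|sa].
    by rewrite -sa in ua; move: us; rewrite ltNge ua.
  by have := He a; rewrite sa ae => /(_ isT); rewrite ltNge ua.
have sp : 0 < s.
  rewrite lt_neqAle s0 andbT; apply/negP => /eqP s0'.
  by rewrite -s0' in us; move: u0; rewrite ltNge us.
have us0 : u s = 0.
  apply/eqP; rewrite eq_le us andbT leNgt; apply/negP => us'.
  have nl : \forall r \near s^'-, 0 < u r /\ 0 < r.
    near=> r; split; near: r.
      have H1 := @cvg_at_left_filter R R u s (u s) (cs sp); exact: (@cvgr_gt _ _ _ _ _ _ H1 _ us').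
    exact: nbhs_left_gt.
  have [e e0 He] := near_left_ex _ _ nl.
  have [h1 h2] : 0 < u (s - e / 2) /\ 0 < s - e / 2.
    apply: He; apply/andP; split.
      by rewrite ltrD2l ltrN2 ltr_pdivrMr // ltr_pMr // ltr1n.
    by rewrite gtrDl oppr_lt0 divr_gt0.
  have h3 : s - e / 2 < s by rewrite gtrDl oppr_lt0 divr_gt0.
  by move: h1; rewrite ltNge (ltW (left _ (ltW h2) h3)).
have dneg := hz s sp us0.
have nq : \forall h \near (0:R)^', h^-1 * (u (h + s) - u s) < 0.
  have H2 := derive_quot _ _ _ (du0 s sp). have := (@cvgr_lt _ _ _ _ _ _ H2 _ dneg); apply; typeclasses eauto.
have [e e0 He] := near_dnbhs_ex _ nq.
pose m := Order.min e s.
have m0 : 0 < m by rewrite lt_min e0 sp.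
have me : m <= e by rewrite ge_min lexx.
have ms : m <= s by rewrite ge_min lexx orbT.
have := He (- (m / 2)).
rewrite normrN gtr0_norm ?divr_gt0 // oppr_eq0 gt_eqF ?divr_gt0 //.
rewrite (lt_le_trans _ me) ?ltr_pdivrMr ?ltr_pMr ?ltr1n // => /(_ isT isT).
rewrite us0 subr0 nmulr_rlt0 ?invr_lt0 ?oppr_lt0 ?divr_gt0 //.
have r0 : 0 <= - (m / 2) + s.
  rewrite addrC subr_ge0 (le_trans _ ms) // ler_pdivrMr // ler_pMr // ler1n //.
have r1 : - (m / 2) + s < s by lra.
by rewrite ltNge (ltW (left _ r0 r1)).
Unshelve. all: end_near.
Qed.
Definition nsq (u : 'rV[R]_3) := \sum_(i < 3) (u ord0 i) ^+ 2.
Definition dot (u w : 'rV[R]_3) := \sum_(i < 3) u ord0 i * w ord0 i.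

Lemma nsq_ge0 (u : 'rV[R]_3) : 0 <= nsq u.
Proof. by apply: sumr_ge0 => i _; exact: sqr_ge0. Qed.

Lemma enorm_ge0 (u : 'rV[R]_3) : 0 <= enorm u.
Proof. exact: sqrtr_ge0. Qed.

Lemma enorm_sq (u : 'rV[R]_3) : enorm u ^+ 2 = nsq u.
Proof. by rewrite /enorm sqr_sqrtr // nsq_ge0. Qed.

Lemma CS (u w : 'rV[R]_3) : dot u w <= enorm u * enorm w.
Proof.
have L (a0 a1 a2 b0 b1 b2 : R) : (a0 * b0 + a1 * b1 + a2 * b2) ^+ 2 <=
      (a0 ^+ 2 + a1 ^+ 2 + a2 ^+ 2) * (b0 ^+ 2 + b1 ^+ 2 + b2 ^+ 2).
    rewrite -subr_ge0.
    have -> : (a0 ^+ 2 + a1 ^+ 2 + a2 ^+ 2) * (b0 ^+ 2 + b1 ^+ 2 + b2 ^+ 2) - (a0 * b0 + a1 * b1 + a2 * b2) ^+ 2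
     = (a0 * b1 - a1 * b0) ^+ 2 + (a0 * b2 - a2 * b0) ^+ 2 + (a1 * b2 - a2 * b1) ^+ 2 by ring.
    by rewrite !addr_ge0 // sqr_ge0.
  have H : dot u w ^+ 2 <= nsq u * nsq w.
    by rewrite /dot /nsq !big_ord_recr !big_ord0 /= !add0r; apply: L.
have [d0|d0] := leP (dot u w) 0.
  by apply: (le_trans d0); rewrite mulr_ge0 // enorm_ge0.
rewrite /enorm -sqrtrM ?nsq_ge0 // -(@ger0_norm _ (dot u w)) ?(ltW d0) //.
by rewrite -sqrtr_sqr ler_sqrt // mulr_ge0 // nsq_ge0.
Qed.

Lemma coord_cvg {T : Type} (F : set_system T) {FF : Filter F} (f : T -> 'rV[R]_3) (l : 'rV[R]_3) i :
  f x @[x --> F] --> l -> f x ord0 i @[x --> F] --> l ord0 i.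
Proof.
move=> H; exact: (continuous_cvg _ (@coord_continuous R 1 3 ord0 i l) H).
Qed.

Lemma coord_derive (f : R -> 'rV[R]_3) (t : R) d i :
  is_derive t 1 f d -> is_derive t 1 (fun s => f s ord0 i) (d ord0 i).
Proof.
move=> [dr dv]; move: dr; rewrite /derivable; rewrite /derive in dv; rewrite dv => H.
have H' : (fun h : R => h^-1 *: (((fun s => f s ord0 i) \o shift t) (h *: 1) - f t ord0 i)) @ 0^' --> d ord0 i.
  apply: cvg_trans (coord_cvg _ _ _ i H); apply: near_eq_cvg.
  by near=> h; rewrite /= !mxE.
split; first exact: (cvgP _ H').
exact: (cvg_lim _ H').
Unshelve. all: end_near. Qed.

Lemma nsq_cvg {T : Type} (F : set_system T) {FF : Filter F} (f : T -> 'rV[R]_3) (l : 'rV[R]_3) :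
  f x @[x --> F] --> l -> nsq (f x) @[x --> F] --> nsq l.
Proof.
move=> H; rewrite /nsq.
apply: (@cvg_big _ _ +%R 0 xpredT add_continuous) => i _.
under eq_cvg do rewrite expr2.
rewrite expr2; apply: cvgM; exact: coord_cvg.
Qed.

Lemma vbarrier (f df : R -> 'rV[R]_3) (phi dphi : R -> R) :
  f x @[x --> 0^'+] --> f 0 ->
  phi x @[x --> 0^'+] --> phi 0 ->
  (forall t : R, 0 < t -> is_derive t 1 f (df t)) ->
  (forall t : R, 0 < t -> is_derive t 1 phi (dphi t)) ->
  (forall t : R, 0 <= t -> 0 < phi t) ->
  enorm (f 0) < phi 0 ->
  (forall t : R, 0 < t -> enorm (f t) = phi t -> dot (f t) (df t) < phi t * dphi t) ->
  forall t : R, 0 <= t -> enorm (f t) < phi t.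
Proof.
move=> cf cphi Df Dphi phi0 init cross.
pose c (i : 'I_3) := fun s => f s ord0 i.
pose u := \sum_(i < 3) (c i * c i) - phi * phi.
have uE s : u s = nsq (f s) - phi s ^+ 2.
  rewrite /u /nsq !fctE /= fct_sumE expr2; congr (_ - _).
have sq (e p : R) : 0 <= e -> 0 < p -> e ^+ 2 < p ^+ 2 -> e < p.
  move=> e0 p0 h; nra.
suff H : forall t : R, 0 <= t -> u t < 0.
  move=> t t0; have := H t t0; rewrite uE subr_lt0 -enorm_sq => h.
  by apply: sq => //; [exact: enorm_ge0 | exact: phi0].
apply: (@barrier u (fun t => 2 * dot (f t) (df t) - 2 * (phi t * dphi t))).
- have -> : u = fun x => nsq (f x) - phi x ^+ 2 by apply/funext => x; exact: uE.
  apply: cvgB; last by under eq_cvg do rewrite expr2; rewrite expr2; exact: cvgM.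
  exact: nsq_cvg.
- move=> t t0.
  have := is_deriveB (is_derive_sum (fun i => is_deriveM (coord_derive _ _ _ i (Df t t0)) (coord_derive _ _ _ i (Df t t0)))) (is_deriveM (Dphi t t0) (Dphi t t0)).
  move=> h.
  have -> : (2 * dot (f t) (df t) - 2 * (phi t * dphi t)) = (\sum_(i < 3) (f t ord0 i *: df t ord0 i + f t ord0 i *: df t ord0 i) - (phi t *: dphi t + phi t *: dphi t)).
    rewrite /dot mulr_sumr; congr (_ - _); last first.
      by rewrite -[phi t *: dphi t]/(phi t * dphi t); lra.
    by apply: eq_bigr => i _; rewrite -[f t ord0 i *: df t ord0 i]/(f t ord0 i * df t ord0 i); lra.
  exact: h.
- rewrite uE subr_lt0 -enorm_sq; have := enorm_ge0 (f 0); have := phi0 0 (lexx 0); nra.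
- move=> t t0; rewrite uE => /eqP; rewrite subr_eq0 -enorm_sq => /eqP e2.
  have e1 : enorm (f t) = phi t.
    have := phi0 t (ltW t0); have := enorm_ge0 (f t); nra.
  have := cross t t0 e1; lra.
Qed.

Lemma is_derive_powshift (T p t : R) : 0 < t + T ->
  is_derive t 1 (fun s => (s + T) `^ p) (p * (t + T) `^ (p - 1)).
Proof.
move=> h; have := @is_derive1_comp _ (fun z : R => z `^ p) (shift T) t _ _ (is_derive1_powR p h) (is_derive_shift t 1 T).
by rewrite mulr1.
Qed.

Lemma is_derive_affpow (A k T p t : R) : 0 < t + T ->
  is_derive t 1 (fun s => A + k * (s + T) `^ p) (k * (p * (t + T) `^ (p - 1))).
Proof.
move=> h.
have H1 := is_deriveD (is_derive_cst A t 1) (is_deriveM (is_derive_cst k t 1) (is_derive_powshift T p t h)).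
have -> : k * (p * (t + T) `^ (p - 1)) = 0 + (cst k t *: (p * (t + T) `^ (p - 1)) + (t + T) `^ p *: 0).
  by rewrite add0r scaler0 addr0.
exact: H1.
Qed.

Lemma is_derive_aff (A k t : R) : is_derive t 1 (fun s => A + k * s) k.
Proof.
have H1 := is_deriveD (is_derive_cst A t 1) (is_deriveM (is_derive_cst k t 1) (is_derive_id t (1 : R))).
rewrite (_ : (fun s => A + k * s) = cst A + cst k * id) //.
apply: (is_derive_eq H1).
by rewrite add0r scaler0 addr0 -[cst k t *: 1]/(k * 1) mulr1.
Qed.

Lemma rcont_of_derive (g : R -> R) (d : R) : is_derive (0 : R) 1 g d -> g x @[x --> 0^'+] --> g 0.
Proof.
move=> [dr _]; apply: cvg_at_right_filter.
by apply: differentiable_continuous; apply/derivable1_diffP.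
Qed.

Lemma dot_lin (u w : 'rV[R]_3) (k : R) : dot u (k *: u + w) = k * nsq u + dot u w.
Proof.
rewrite /dot /nsq mulr_sumr -big_split; apply: eq_bigr => i _; rewrite !mxE /=; ring.
Qed.

Lemma inv_le (p q tau : R) : 0 < p -> 0 < q -> q <= tau * p -> p^-1 <= tau * q^-1.
Proof.
move=> p0 q0 h; rewrite -subr_ge0.
have -> : tau * q^-1 - p^-1 = (tau * p - q) / (p * q) by field; rewrite ?gt_eqF.
by rewrite divr_ge0 ?subr_ge0 // mulr_ge0 // ltW.
Qed.

Lemma rcont_within (f : R -> 'rV[R]_3) :
  {within `[0, +oo[, continuous f} -> f x @[x --> 0^'+] --> f 0.
Proof. by move=> /continuous_within_itvcyP[]. Qed.
End V.

Lemma aB_lemma (R : realType) (H beta eta gam L T y s A : R) :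
  0 < H -> 1 < eta -> 0 <= gam -> beta <= gam -> gam < 1 / 2 -> 1 <= L -> 1 <= T ->
  (eta * (2 * L ^+ 2) `^ gam / H) `^ ((1 - 2 * gam)^-1) <= T ->
  0 <= s -> 0 <= y -> y <= L * (s + T) ->
  H / (1 + y ^+ 2) `^ beta <= A -> eta <= A * (s + T).
Proof.
move=> H0 he gam0 bg gamlt L1 T1 TB s0 y0 yL ha.
pose B := eta * (2 * L ^+ 2) `^ gam / H.
have sT1 : 1 <= s + T by lra.
have Q1 : 1 <= 1 + y ^+ 2 by have := sqr_ge0 y; lra.
have W0 : 0 <= 2 * L ^+ 2 by have := sqr_ge0 L; lra.
have b1 : (1 + y ^+ 2) `^ beta <= (2 * L ^+ 2) `^ gam * (s + T) `^ (2 * gam).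
  apply: (le_trans (ler_powR Q1 bg)).
  have e1 : (s + T) `^ (2 * gam) = ((s + T) ^+ 2) `^ gam.
    by rewrite powRrM powR_mulrn //; lra.
  have e2 : (2 * L ^+ 2) `^ gam * ((s + T) ^+ 2) `^ gam = (2 * L ^+ 2 * (s + T) ^+ 2) `^ gam.
    by rewrite [RHS](powRM _ W0 (sqr_ge0 _)).
  rewrite e1 e2.
  apply: ge0_ler_powR => //; rewrite ?nnegrE; first lra.
    by apply: mulr_ge0 => //; apply: sqr_ge0.
  have h6 : 0 <= (L - 1) * (s + T - 1) by apply: mulr_ge0; lra.
  have h7 : 1 <= L * (s + T) by nra.
  have h8 : y ^+ 2 <= (L * (s + T)) ^+ 2.
    by rewrite !expr2; apply: ler_pM => //; lra.
  have h9 : 1 <= (L * (s + T)) ^+ 2 by rewrite expr2; nra.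
  have -> : 2 * L ^+ 2 * (s + T) ^+ 2 = (L * (s + T)) ^+ 2 + (L * (s + T)) ^+ 2 by ring.
  lra.
have p0 : 0 < 1 - 2 * gam by lra.
have B0 : 0 <= B.
  by rewrite /B; apply: divr_ge0; [apply: mulr_ge0; [lra|exact: powR_ge0]|lra].
have b2 : B <= (s + T) `^ (1 - 2 * gam).
  have -> : B = (B `^ ((1 - 2 * gam)^-1)) `^ (1 - 2 * gam).
    by rewrite -powRrM mulVf ?gt_eqF // powRr1.
  apply: ge0_ler_powR; rewrite ?nnegrE ?powR_ge0 //; lra.
have sT0 : 0 < s + T by lra.
have b3 : s + T = (s + T) `^ (2 * gam) * (s + T) `^ (1 - 2 * gam).
  rewrite -powRD; last by apply/implyP => _; rewrite gt_eqF.
  by rewrite (_ : 2 * gam + (1 - 2 * gam) = 1) ?powRr1 //; [lra | ring].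
set Q := (1 + y ^+ 2) `^ beta in b1 ha *.
have Q0 : 0 < Q by apply: powR_gt0; lra.
have P2 : 0 <= (s + T) `^ (2 * gam) := powR_ge0 _ _.
have hBH : B * H = eta * (2 * L ^+ 2) `^ gam by rewrite /B; field; lra.
have hQ : eta * Q <= H * (s + T).
  have k1 := ler_wpM2l (ltW H0) (ler_wpM2l P2 b2).
  have k2 := ler_wpM2l (ltW (lt_trans ltr01 he)) b1.
  rewrite [in X in _ <= X]b3.
  set P1 := (s + T) `^ (1 - 2 * gam) in k1 *.
  set P2' := (s + T) `^ (2 * gam) in k1 k2 *.
  set W := (2 * L ^+ 2) `^ gam in hBH k2.
  have : H * (P2' * B) = P2' * (eta * W) by rewrite -hBH; ring.
  lra.
have h1 : eta <= H / Q * (s + T).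
  by rewrite mulrAC ler_pdivlMr.
apply: (le_trans h1); apply: ler_wpM2r; lra.
Qed.

Lemma crossD (R : realType) (K S P A G D N eta : R) :
  0 < K -> 0 < S -> 0 < P -> eta <= A * S -> G < K * P ->
  D <= K * (S * P) * G -> N = (K * (S * P)) ^+ 2 ->
  - A * N + D < K * (S * P) * (K * (- (eta - 1) * P)).
Proof.
move=> K0 S0 P0 hA hG h1 hN.
set F := K * (S * P) in h1 hN *.
have F0 : 0 < F by rewrite /F; apply: mulr_gt0 => //; apply: mulr_gt0.
have h5 : F * G < F * (K * P) by rewrite ltr_pM2l.
have h6 : 0 <= F * (K * P) * (A * S - eta).
  apply: mulr_ge0; [apply: mulr_ge0; [lra|]; apply: mulr_ge0; lra | lra].
have E1 : A * F ^+ 2 = F * (K * P) * (A * S) by rewrite expr2 {2}/F; ring.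
rewrite hN.
lra.
Qed.

Lemma powbound (R : realType) (T t eta : R) : 1 <= T -> 0 <= t -> 0 < eta ->
  (t + 1) `^ (- eta) <= T `^ eta * (t + T) `^ (- eta).
Proof.
move=> T1 t0 e0.
rewrite !powRN; apply: inv_le; try apply: powR_gt0; try lra.
rewrite -powRM; [|lra|lra].
apply: ge0_ler_powR; rewrite ?nnegrE; try lra.
  by apply: mulr_ge0; lra.
nra.
Qed.

Theorem lemma4 (R : realType) (H beta eta C : R) (x0 v0 : 'rV[R]_3) :
  0 < H -> beta < 1 / 2 -> 1 < eta ->
  exists K : R,
    forall (x v g : R -> 'rV[R]_3) (a : 'rV[R]_3 -> R -> R),
      {within `[0, +oo[, continuous x} ->
      {within `[0, +oo[, continuous v} ->
      (forall t : R, 0 < t -> is_derive t 1 x (v t)) ->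
      (forall t : R, 0 < t -> is_derive t 1 v (- (a (x t) t) *: v t + g t)) ->
      (forall (y : 'rV[R]_3) (t : R), 0 <= t ->
          H / ((1 + enorm y ^+ 2) `^ beta) <= a y t) ->
      (forall t : R, 0 <= t -> enorm (g t) <= C * (1 + t) `^ (- eta)) ->
      x 0 = x0 -> v 0 = v0 ->
      forall t : R, 0 <= t -> enorm (v t) <= K * (1 + t) `^ (- (eta - 1)).
Proof.
move=> H0 hb he.
pose C1 := Num.max C 0 + 1.
pose V0 := enorm v0. pose X := enorm x0.
pose M := V0 + 1 + C1 / (eta - 1).
pose L := Num.max (X + 1) M.
pose gam := Num.max beta 0.
pose B := eta * (2 * L ^+ 2) `^ gam / H.
pose T := Num.max 1 (B `^ ((1 - 2 * gam)^-1)).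
pose K := Num.max (C1 * T `^ eta) ((V0 + 1) * T `^ (eta - 1)).
exists K => x v g a cx cv Dx Dv ha hg ex0 ev0.
have Cm : C <= Num.max C 0 by rewrite le_max lexx.
have Cm0 : 0 <= Num.max C 0 by rewrite le_max lexx orbT.
have C10 : 0 < C1 by rewrite /C1; lra.
have V00 : 0 <= V0 := enorm_ge0 _ _.
have X0 : 0 <= X := enorm_ge0 _ _.
have e10 : 0 < eta - 1 by lra.
have D0 : 0 <= C1 / (eta - 1) by rewrite divr_ge0 // ltW.
have M1 : V0 + 1 <= M by rewrite /M; lra.
have XL : X + 1 <= L by rewrite le_max lexx.
have ML : M <= L by rewrite le_max lexx orbT.
have L1 : 1 <= L by lra.
have gam0 : 0 <= gam by rewrite le_max lexx orbT.
have bg : beta <= gam by rewrite le_max lexx.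
have gamlt : gam < 1 / 2 by rewrite gt_max hb /=; lra.
have T1 : 1 <= T by rewrite le_max lexx.
have TB : B `^ ((1 - 2 * gam)^-1) <= T by rewrite le_max lexx orbT.
have T0 : 0 < T by lra.
have KC : C1 * T `^ eta <= K by rewrite le_max lexx.
have KV : (V0 + 1) * T `^ (eta - 1) <= K by rewrite le_max lexx orbT.
have K0 : 0 < K.
  apply: (lt_le_trans _ KC); apply: mulr_gt0 => //; exact: powR_gt0.
have hg' : forall s : R, 0 <= s -> enorm (g s) < C1 * (s + 1) `^ (- eta).
  move=> s s0; have := hg s s0; rewrite [1 + s]addrC => h; apply: (le_lt_trans h).
  rewrite ltr_pM2r; first by rewrite /C1; lra.
  by apply: powR_gt0; lra.
have ha' : forall (y : 'rV[R]_3) (s : R), 0 <= s -> 0 < a y s.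
  move=> y s s0; apply: (lt_le_trans _ (ha y s s0)); apply: divr_gt0 => //.
  by apply: powR_gt0; have := sqr_ge0 (enorm y); lra.
have vM : forall s : R, 0 <= s -> enorm (v s) < M.
  pose k := - (C1 / (eta - 1)).
  have Pl1 : forall s : R, 0 <= s -> (s + 1) `^ (1 - eta) <= 1.
    move=> s s0; rewrite -[X in _ <= X](powRr0 (s + 1)); apply: ler_powR; lra.
  have key := @vbarrier R v (fun s => - (a (x s) s) *: v s + g s)
    (fun s => M + k * (s + 1) `^ (1 - eta))
    (fun s => k * ((1 - eta) * (s + 1) `^ (1 - eta - 1))).
  have c1 := rcont_within R v cv.
  have o1 : (0:R) < 0 + 1 by rewrite add0r.
  have c2 := @rcont_of_derive R _ _ (@is_derive_affpow R M k 1 (1 - eta) 0 o1).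
  have c3 : forall t : R, 0 < t -> is_derive t 1 (fun s => M + k * (s + 1) `^ (1 - eta))
    (k * ((1 - eta) * (t + 1) `^ (1 - eta - 1))).
    move=> t t0; have o2 : 0 < t + 1 by rewrite addr_gt0.
    exact: (@is_derive_affpow R M k 1 (1 - eta) t o2).
  have c4 : forall t : R, 0 <= t -> 0 < M + k * (t + 1) `^ (1 - eta).
    move=> t t0; have := Pl1 t t0.
    have := ler_wpM2l D0 (Pl1 t t0); rewrite mulr1 /k /M; lra.
  have c5 : enorm (v 0) < M + k * (0 + 1) `^ (1 - eta).
    by rewrite ev0 add0r powR1 mulr1 /k /M -/V0; lra.
  have c6 : forall t : R, 0 < t -> enorm (v t) = M + k * (t + 1) `^ (1 - eta) ->
      dot R (v t) (- (a (x t) t) *: v t + g t) <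
      (M + k * (t + 1) `^ (1 - eta)) * (k * ((1 - eta) * (t + 1) `^ (1 - eta - 1))).
    move=> t t0 e.
    have hd : k * ((1 - eta) * (t + 1) `^ (1 - eta - 1)) = C1 * (t + 1) `^ (- eta).
      rewrite (_ : 1 - eta - 1 = - eta); last by ring.
      rewrite /k mulrA; congr (_ * _); field; lra.
    rewrite hd dot_lin.
    have h1 := @CS R (v t) (g t); rewrite e in h1.
    have h2 := hg' t (ltW t0).
    have h3 : 0 <= a (x t) t * nsq R (v t) := mulr_ge0 (ltW (ha' _ _ (ltW t0))) (nsq_ge0 _ (v t)).
    have h4 := c4 t (ltW t0).
    have h5 : (M + k * (t + 1) `^ (1 - eta)) * enorm (g t) < (M + k * (t + 1) `^ (1 - eta)) * (C1 * (t + 1) `^ (- eta)) by rewrite ltr_pM2l.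
    lra.
  move=> s s0; apply: (lt_le_trans (key c1 c2 Dv c3 c4 c5 c6 s s0)).
  have := powR_ge0 (s + 1) (1 - eta).
  have := mulr_ge0 D0 (powR_ge0 (s + 1) (1 - eta)); rewrite /k; lra.
have M0 : 0 < M by lra.
have xB : forall s : R, 0 <= s -> enorm (x s) < X + 1 + M * s.
  have key := @vbarrier R x v (fun s => (X + 1) + M * s) (fun _ => M).
  have c1 := rcont_within R x cx.
  have c2 := @rcont_of_derive R _ _ (@is_derive_aff R (X + 1) M 0).
  have c3 : forall t : R, 0 < t -> is_derive t 1 (fun s => (X + 1) + M * s) M.
    move=> t t0; exact: (@is_derive_aff R (X + 1) M t).
  have c4 : forall t : R, 0 <= t -> 0 < (X + 1) + M * t.
    move=> t t0; have := mulr_ge0 (ltW M0) t0; lra.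
  have c5 : enorm (x 0) < (X + 1) + M * 0 by rewrite ex0 mulr0 addr0 -/X; lra.
  have c6 : forall t : R, 0 < t -> enorm (x t) = (X + 1) + M * t ->
      dot R (x t) (v t) < ((X + 1) + M * t) * M.
    move=> t t0 e.
    have h1 := @CS R (x t) (v t); rewrite e in h1.
    have h2 := vM t (ltW t0).
    have h4 := c4 t (ltW t0).
    have h5 : (X + 1 + M * t) * enorm (v t) < (X + 1 + M * t) * M by rewrite ltr_pM2l.
    lra.
  exact: (key c1 c2 Dx c3 c4 c5 c6).
have aB : forall s : R, 0 <= s -> eta <= a (x s) s * (s + T).
  move=> s s0.
  have y0 : 0 <= enorm (x s) := enorm_ge0 _ _.
  have yl := xB s s0.
  have yL : enorm (x s) <= L * (s + T).
    have := ler_wpM2l (le_trans ler01 L1) T1; rewrite mulr1.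
    have := ler_wpM2r s0 ML; lra.
  apply: (@aB_lemma R H beta eta gam L T (enorm (x s)) s (a (x s) s) H0 he gam0 bg gamlt L1 T1 _ s0 y0 yL (ha _ _ s0)).
  exact: TB.
have vC : forall s : R, 0 <= s -> enorm (v s) < 0 + K * (s + T) `^ (- (eta - 1)).
  have key := @vbarrier R v (fun s => - (a (x s) s) *: v s + g s)
    (fun s => 0 + K * (s + T) `^ (- (eta - 1)))
    (fun s => K * (- (eta - 1) * (s + T) `^ (- (eta - 1) - 1))).
  have c1 := rcont_within R v cv.
  have o1 : (0:R) < 0 + T by rewrite add0r.
  have c2 := @rcont_of_derive R _ _ (@is_derive_affpow R 0 K T (- (eta - 1)) 0 o1).
  have c3 : forall t : R, 0 < t -> is_derive t 1 (fun s => 0 + K * (s + T) `^ (- (eta - 1)))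
      (K * (- (eta - 1) * (t + T) `^ (- (eta - 1) - 1))).
    move=> t t0; have o2 : 0 < t + T by rewrite addr_gt0.
    exact: (@is_derive_affpow R 0 K T (- (eta - 1)) t o2).
  have c4 : forall t : R, 0 <= t -> 0 < 0 + K * (t + T) `^ (- (eta - 1)).
    move=> t t0; rewrite add0r; apply: mulr_gt0 => //; apply: powR_gt0.
    by apply: (lt_le_trans T0); rewrite lerDr.
  have c5 : enorm (v 0) < 0 + K * (0 + T) `^ (- (eta - 1)).
    rewrite ev0 !add0r -/V0 powRN.
    have w0 : 0 < T `^ (eta - 1) by apply: powR_gt0.
    have : V0 + 1 <= K / T `^ (eta - 1) by rewrite ler_pdivlMr.
    lra.
  have c6 : forall t : R, 0 < t -> enorm (v t) = 0 + K * (t + T) `^ (- (eta - 1)) ->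
      dot R (v t) (- (a (x t) t) *: v t + g t) <
      (0 + K * (t + T) `^ (- (eta - 1))) * (K * (- (eta - 1) * (t + T) `^ (- (eta - 1) - 1))).
    move=> t t0 e.
    have S0 : 0 < t + T by rewrite addr_gt0.
    have P0 : 0 < (t + T) `^ (- eta) by apply: powR_gt0.
    have e1 : (t + T) `^ (- (eta - 1)) = (t + T) * (t + T) `^ (- eta).
      rewrite -{2}(powRr1 (ltW S0)) -powRD; last by apply/implyP => _; rewrite gt_eqF.
      by congr (_ `^ _); ring.
    have e2 : (t + T) `^ (- (eta - 1) - 1) = (t + T) `^ (- eta) by congr (_ `^ _); ring.
    rewrite e1 add0r in e; rewrite e1 e2 add0r.
    rewrite dot_lin.
    have h1 := @CS R (v t) (g t); rewrite e in h1.
    have hN : nsq R (v t) = (K * ((t + T) * (t + T) `^ (- eta))) ^+ 2 by rewrite -enorm_sq e.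
    have hA := aB t (ltW t0).
    have hG : enorm (g t) < K * (t + T) `^ (- eta).
      apply: (lt_le_trans (hg' t (ltW t0))).
      have q1 := @powbound R _ _ _ T1 (ltW t0) (lt_trans ltr01 he).
      have q2 := ler_wpM2l (ltW C10) q1.
      have q3 := ler_wpM2r (ltW P0) KC.
      rewrite mulrA in q2; exact: (le_trans q2 q3).
    exact: (@crossD R _ _ _ _ _ _ _ _ K0 S0 P0 hA hG h1 hN).
  move=> s s0; exact: (key c1 c2 Dv c3 c4 c5 c6 s s0).
move=> t t0.
have := vC t t0; rewrite add0r => h.
apply: (le_trans (ltW h)); apply: ler_wpM2l; first exact: ltW.
have t1 : 0 < t + 1 by lra.
have tT : t + 1 <= t + T by lra.
rewrite [1 + t]addrC !powRN.
have p1 : 0 < (t + T) `^ (eta - 1) by apply: powR_gt0; exact: (lt_le_trans t1 tT).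
have p2 : 0 < (t + 1) `^ (eta - 1) by exact: powR_gt0.
have p3 : (t + 1) `^ (eta - 1) <= 1 * (t + T) `^ (eta - 1).
  rewrite mul1r; apply: ge0_ler_powR; rewrite ?nnegrE //; lra.
by have := @inv_le R _ _ 1 p1 p2 p3; rewrite mul1r.
Qed.
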